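(* Let $M\subset X$ be nonempty, $F:X\rightrightarrows Y$ with nonempty values, and $\bar x\in M\cap M'$ such that $F(\bar x)$ is $K$-sequentially compact and $\bar x$ is an ideal minimum for $F$ on $M$. Suppose there are $e\in K\setminus\{0\}$ and $\ell>0$ such that for all $u\in X\setminus M$ and $v\in M$, $$F(u)+\ell\|u-v\|e\subset F(v)+K.$$ Then $\bar x$ is an ideal minimum on $X$ for the set-valued map $G:X\rightrightarrows Y$, $G(x)=F(x)+\ell d_M(x)e$.
   Context: $X,Y$ are real normed spaces, $K\subset Y$ a pointed closed convex cone, $M'$ the set of accumulation points of $M$, $d_M(x)=\inf_{m\in M}\|x-m\|$. A nonempty $A\subset Y$ is $K$-sequentially compact if for every $(a_n)\subset A$ there is $(c_n)\subset K$ such that $(a_n-c_n)$ has a subsequence converging to an element of $A$. For nonempty $S\subset X$, $\bar x\in S$ is an ideal minimum for $F$ on $S$ if $F(\bar x)\not\subset F(x)+(Y\setminus -K)$ for all $x\in S\setminus\{\bar x\}$; ''on $X$'' means $S=X$. *)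

(* Defs.v *)
From HB Require Import structures.
From mathcomp Require Import all_boot all_order all_algebra.
From mathcomp Require Import all_classical all_reals all_analysis.
Set Implicit Arguments. Unset Strict Implicit. Unset Printing Implicit Defensive.
Import Order.TTheory GRing.Theory Num.Theory.
Import numFieldNormedType.Exports.
Local Open Scope classical_set_scope.
Local Open Scope ring_scope.

Section Defs.
Context {R : realType} {Y : normedModType R}.

Definition minkowski_sum (A B : set Y) : set Y := [set a + b | a in A & b in B].

Definition setopp (K : set Y) : set Y := [set y | K (- y)].

Definition pointed_closed_convex_cone (K : set Y) : Prop :=
  [/\ K 0,
      (forall k1 k2, K k1 -> K k2 -> K (k1 + k2)),
      (forall (t : R) k, 0 <= t -> K k -> K (t *: k)),
      (forall k, K k -> K (- k) -> k = 0)
    & closed K].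

Definition K_seq_compact (K A : set Y) : Prop :=
  A !=set0 /\
  forall a : nat -> Y, (forall n, A (a n)) ->
    exists c : nat -> Y, (forall n, K (c n)) /\
      exists (phi : nat -> nat) (y : Y),
        {homo phi : n m / (n < m)%N} /\ A y /\
        ((fun n => a (phi n) - c (phi n)) @ \oo --> y).

End Defs.

Section Defs2.
Context {R : realType} {X Y : normedModType R}.

Definition ideal_min (K : set Y) (F : X -> set Y) (S : set X) (xb : X) : Prop :=
  S xb /\ forall x, S x -> x != xb -> ~ (F xb `<=` minkowski_sum (F x) (~` setopp K)).

Definition dist_set (M : set X) (x : X) : R := inf [set `|x - m| | m in M].

End Defs2.

(* Main.v *)
Set Warnings "-all".
Require Import Defs.
From HB Require Import structures.
From mathcomp Require Import all_boot all_order all_algebra.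
From mathcomp Require Import all_classical all_reals all_analysis.
Import Order.TTheory GRing.Theory Num.Theory.
Import numFieldNormedType.Exports.
Local Open Scope classical_set_scope.
Local Open Scope ring_scope.

Theorem mainTheorem16 (R : realType) (X Y : normedModType R)
  (K : set Y) (M : set X) (F : X -> set Y) (xb : X) (e : Y) (l : R) :
  pointed_closed_convex_cone K ->
  M !=set0 ->
  (forall x, F x !=set0) ->
  M xb -> limit_point M xb ->
  K_seq_compact K (F xb) ->
  ideal_min K F M xb ->
  K e -> e != 0 -> 0 < l ->
  (forall u v, ~ M u -> M v ->
     [set y + (l * `|u - v|) *: e | y in F u] `<=` minkowski_sum (F v) K) ->
  ideal_min K (fun x => [set y + (l * dist_set M x) *: e | y in F x]) setT xb.
Proof.
move=> [K0 KD KZ Kpt Kcl] [m0 Mm0] Fne Mxb lpxb [Fne' Fcomp] [_ imin] Ke e0 l0 Hyp.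
have lbD : forall x, has_lbound [set `|x - m| | m in M].
  by move=> x; exists 0 => _ [m _ <-].
have neD : forall x, [set `|x - m| | m in M] !=set0.
  by move=> x; exists `|x - m0|, m0.
have Dle : forall x m, M m -> dist_set M x <= `|x - m|.
  by move=> x m Mm; apply: (ge_inf (lbD x)); exists m.
have D0 : forall z, M z -> dist_set M z = 0.
  move=> z Mz; apply/eqP; rewrite eq_le; apply/andP; split.
    by have := Dle z z Mz; rewrite subrr normr0.
  by apply: lb_le_inf (neD z) _ => _ [m _ <-].
have simplG : forall z, M z -> [set y + (l * dist_set M z) *: e | y in F z] = F z.
  move=> z Mz; rewrite D0 // mulr0 scale0r; apply/seteqP; split => y.
    by move=> [y' Fy' <-]; rewrite addr0.
  by move=> Fy; exists y => //; rewrite addr0.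
split => // x _ xnxb; rewrite simplG // => Hsub.
have [Mx|nMx] := pselect (M x).
  by apply: (imin x Mx xnxb); rewrite -(simplG x Mx).

set d := dist_set M x.
have vex : forall n : nat, exists v, [/\ M v, v != xb & `|x - v| < d + n.+1%:R^-1].
  move=> n; have ep : 0 < n.+1%:R^-1 :> R by rewrite invr_gt0 ltr0n.
  have [_ [m Mm <-] hm] := inf_adherent (divr_gt0 ep (ltr0n R 2)) (conj (neD x) (lbD x)).
  have [mxb|mnxb] := eqVneq m xb; last first.
    exists m; split => //; apply: lt_le_trans hm _; rewrite lerD2l.
    rewrite ler_pdivrMr // ler_peMr // ?ltW //.
    by rewrite ltr1n.
  subst m.
  have [v [vnxb Mv bv]] := lpxb (ball xb (n.+1%:R^-1 / 2)) (nbhsx_ballx _ _ (divr_gt0 ep (ltr0n R 2))).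
  exists v; split => //.
  rewrite -ball_normE /= in bv.
  apply: le_lt_trans (ler_distD xb x v) _.
  by rewrite [n.+1%:R^-1]splitr addrA ltrD.
have [v vP] := choice vex.
have yex : forall n, exists y, F xb y /\ ~ minkowski_sum (F (v n)) (~` setopp K) y.
  move=> n; have [Mv vnxb _] := vP n.
  apply: contrapT => H; apply: (imin _ Mv vnxb) => y Fy.
  by apply: contrapT => Ny; apply: H; exists y.
have [yy yyP] := choice yex.
have [c [Kc [phi [y [phih [Fy cvy]]]]]] := Fcomp yy (fun n => (yyP n).1).
have phige : forall n, (n <= phi n)%N.
  elim=> [|k IH] //; exact: leq_ltn_trans IH (phih k k.+1 (ltnSn k)).
have [g [f0 Ff0 <-] [w Nw yE]] := Hsub y Fy.
have [r r0 rb] : nbhs_ball (- w) (~` K).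
  apply/nbhs_ballP; have := closed_openC Kcl; rewrite openE => /(_ (- w) Nw); exact.
have r20 : 0 < r / 2 by rewrite divr_gt0.
have le0 : 0 < l * `|e| by rewrite mulr_gt0 // normr_gt0.
have H1 := (cvgrPdist_lt _ _).1 cvy (r / 2) r20 ; move: H1 => /(_ _) H1.
have H2 := near_infty_natSinv_lt (PosNum (divr_gt0 r20 le0)).
have [n [Hn1 /= Hn2]] := filter_ex (filterI H1 H2).
set m := phi n.
have [Mv _ hv] := vP m.
have [Fym Nym] := yyP m.
have [f Ff [k Kk fkE]] := Hyp x (v m) nMx Mv (f0 + (l * `|x - v m|) *: e) (ex_intro2 _ _ f0 Ff0 erefl).
have Kyf : K (f - yy m).
  apply: contrapT => H; apply: Nym; exists f => //; exists (yy m - f); last by rewrite addrC subrK.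
  by rewrite /setopp /= opprB.
set q := yy m - f - (c m + k).
have Kq : K (- q) by rewrite /q opprB addrC opprB; apply: (KD) => //; exact: (KD).
have dle : d <= `|x - v m| := Dle x (v m) Mv.
set A := (l * `|x - v m|) *: e.
set De := (l * dist_set M x) *: e.
have fE : f = f0 + A - k by rewrite -fkE addrK.
have qw : q - w = (yy m - c m - y) - (l * `|x - v m| - l * d) *: e.
  rewrite /q fE -yE scalerBl -/A -/De.
  rewrite !opprD !opprK !addrA.
  rewrite (addrAC _ k) addrK [RHS](addrAC _ (- A)) [in RHS](addrAC _ (- w) De) subrK.
  by rewrite (addrAC _ (-A) (- c m)) (addrAC _ (-f0) (-c m)) (addrAC _ (-A) (-w)).
have eps0 : 0 <= l * `|x - v m| - l * d by rewrite subr_ge0 ler_pM2l.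
have mn : m.+1%:R^-1 <= n.+1%:R^-1 :> R.
  by rewrite lef_pV2 ?posrE ?ltr0n // ler_nat ltnS phige.
have epsb : (l * `|x - v m| - l * d) * `|e| < r / 2.
  rewrite ltr_pdivlMr // in Hn2.
  apply: le_lt_trans Hn2; rewrite mulrA [_ * l]mulrC.
  rewrite ler_pM2r ?normr_gt0 // -mulrBr ler_pM2l //.
  rewrite lerBlDl; apply: le_trans (ltW hv) _; rewrite lerD2l //.
apply: (rb (- q)) Kq.
rewrite -ball_normE /= opprK addrC qw.
apply: le_lt_trans (ler_normB _ _) _.
rewrite normrZ ger0_norm // [r]splitr ltrD //.
rewrite distrC; exact: Hn1.
Qed.
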